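(* Let $\mathbf{Q}=\begin{pmatrix} Q_{11} & Q_{12}\\ Q_{12} & Q_{22}\end{pmatrix}$ be a real symmetric positive definite $2\times 2$ matrix (the quantum Fisher information matrix of a two-parameter model with parameters $\lambda_1,\lambda_2$). Define the joint-estimation quantity $$\mu=\operatorname{Tr}[\mathbf{Q}^{-1}]=\frac{Q_{11}+Q_{22}}{Q_{11}Q_{22}-Q_{12}^2},$$ and, for $\gamma\in(0,1)$, the stepwise-estimation quantities $$\mu'(\gamma)=\frac{\operatorname{Tr}[\mathbf{W}_1\mathbf{Q}^{-1}]}{\gamma}+\frac{1}{(1-\gamma)Q_{22}}=\frac{Q_{22}}{\gamma\,(Q_{11}Q_{22}-Q_{12}^2)}+\frac{1}{(1-\gamma)Q_{22}},$$ $$\mu''(\gamma)=\frac{\operatorname{Tr}[\mathbf{W}_2\mathbf{Q}^{-1}]}{\gamma}+\frac{1}{(1-\gamma)Q_{11}}=\frac{Q_{11}}{\gamma\,(Q_{11}Q_{22}-Q_{12}^2)}+\frac{1}{(1-\gamma)Q_{11}},$$ where $\mathbf{W}_1=\operatorname{diag}(1,0)$ and $\mathbf{W}_2=\operatorname{diag}(0,1)$. If $$\frac{Q_{12}^2}{Q_{11}Q_{22}}>2\sqrt{2}-2,$$ then there exists $\gamma\in(0,1)$ such that $\min\big(\mu'(\gamma),\mu''(\gamma)\big)<\mu$; equivalently, $\tilde{\mu}:=\inf_{\gamma\in(0,1)}\min\big(\mu'(\gamma),\mu''(\gamma)\big)<\mu$.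
   Context: Interpretation: for $M$ measurement rounds, $\mu/M$ is the multiparameter quantum Cramér–Rao lower bound on $\Delta^2_{\hat\Lambda_1}+\Delta^2_{\hat\Lambda_2}$ for joint estimation of both parameters, while $\mu'(\gamma)/M$ (resp. $\mu''(\gamma)/M$) is the corresponding lower bound for the stepwise scheme that spends $\gamma M$ rounds estimating $\lambda_1$ (resp. $\lambda_2$) first and the remaining $(1-\gamma)M$ rounds estimating the other parameter as a single-parameter problem (with the first parameter's estimate replaced by its true value, as in the asymptotic limit). ''Stepwise estimation outperforms joint estimation'' means $\tilde\mu<\mu$. *)

(* Defs.v *)
From mathcomp Require Import all_boot all_order all_algebra.
Set Implicit Arguments. Unset Strict Implicit. Unset Printing Implicit Defensive.
Import Order.TTheory GRing.Theory Num.Theory.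
Local Open Scope ring_scope.

Definition sym_posdef (R : rcfType) (Q : 'M[R]_2) : Prop :=
  Q^T = Q /\ forall v : 'cV[R]_2, v != 0 -> 0 < (v^T *m Q *m v) ord0 ord0.

Definition W1 (R : rcfType) : 'M[R]_2 := diag_mx (\row_(i < 2) (if i == ord0 then 1 else 0)).
Definition W2 (R : rcfType) : 'M[R]_2 := diag_mx (\row_(i < 2) (if i == ord0 then 0 else 1)).

Definition Q11 (R : rcfType) (Q : 'M[R]_2) := Q ord0 ord0.
Definition Q22 (R : rcfType) (Q : 'M[R]_2) := Q ord_max ord_max.
Definition Q12 (R : rcfType) (Q : 'M[R]_2) := Q ord0 ord_max.

Definition mu (R : rcfType) (Q : 'M[R]_2) : R := \tr (invmx Q).

Definition mu1 (R : rcfType) (Q : 'M[R]_2) (g : R) : R :=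
  \tr (W1 R *m invmx Q) / g + 1 / ((1 - g) * Q22 Q).
Definition mu2 (R : rcfType) (Q : 'M[R]_2) (g : R) : R :=
  \tr (W2 R *m invmx Q) / g + 1 / ((1 - g) * Q11 Q).

(* Main.v *)
Require Import Defs.
From mathcomp Require Import all_boot all_order all_algebra.
From mathcomp Require Import ring lra.
Import Order.TTheory GRing.Theory Num.Theory.
Local Open Scope ring_scope.

Lemma det2 (R : comNzRingType) (Q : 'M[R]_2) :
  \det Q = Q ord0 ord0 * Q ord_max ord_max - Q ord0 ord_max * Q ord_max ord0.
Proof.
rewrite (expand_det_row Q ord0) !big_ord_recl big_ord0 /cofactor !det_mx11 !mxE /=.
have -> : lift ord0 (0:'I_1) = ord_max by apply/val_inj.
have -> : lift ord_max (0:'I_1) = ord0 :> 'I_2 by apply/val_inj.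
rewrite /bump /= expr0 expr1 addr0 mul1r mulN1r; by rewrite mulrN.
Qed.

Lemma quad2 (R : comNzRingType) (Q : 'M[R]_2) (v : 'cV[R]_2) :
  (v^T *m Q *m v) ord0 ord0 = v ord0 ord0 * (Q ord0 ord0 * v ord0 ord0 + Q ord0 ord_max * v ord_max ord0)
   + v ord_max ord0 * (Q ord_max ord0 * v ord0 ord0 + Q ord_max ord_max * v ord_max ord0).
Proof.
rewrite !mxE !big_ord_recl big_ord0 !mxE !big_ord_recl !big_ord0 !mxE.
have -> : lift ord0 (0:'I_1) = ord_max by apply/val_inj.
rewrite !addr0; ring.
Qed.

Lemma mul2 (R : comNzRingType) (A B : 'M[R]_2) i j :
  (A *m B) i j = A i ord0 * B ord0 j + A i ord_max * B ord_max j.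
Proof.
rewrite !mxE !big_ord_recl big_ord0 addr0.
by have -> : lift ord0 (0:'I_1) = ord_max by apply/val_inj.
Qed.

Lemma tr2 (R : comNzRingType) (A : 'M[R]_2) :
  \tr A = A ord0 ord0 + A ord_max ord_max.
Proof.
rewrite /mxtrace !big_ord_recl big_ord0 addr0.
by have -> : lift ord0 (0:'I_1) = ord_max by apply/val_inj.
Qed.

Lemma pos_form (R : rcfType) (Q : 'M[R]_2) (x y : R) :
  sym_posdef Q -> (x != 0) || (y != 0) ->
  0 < x * (Q ord0 ord0 * x + Q ord0 ord_max * y)
   + y * (Q ord_max ord0 * x + Q ord_max ord_max * y).
Proof.
move=> [_ hP] hxy.
pose v : 'cV[R]_2 := \col_i (if i == ord0 then x else y).
have h0 : v ord0 ord0 = x by rewrite mxE.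
have h1 : v ord_max ord0 = y by rewrite mxE.
have := hP v; rewrite quad2 h0 h1; apply.
apply/eqP => hv.
have e0 : x = 0 by rewrite -h0 hv mxE.
have e1 : y = 0 by rewrite -h1 hv mxE.
by move: hxy; rewrite e0 e1 eqxx.
Qed.

Lemma key (R : rcfType) (a b c p s t : R) : 0 < a -> 0 < b -> 0 < t ->
  t ^+ 2 = a * b - c ^+ 2 -> p * t ^+ 2 = b -> s * t ^+ 2 = a -> b <= a ->
  4 * a * b * (a * b - c ^+ 2) < c ^+ 4 ->
  let g := b / (b + t) in 0 < g < 1 /\ p / g + 1 / ((1 - g) * b) < p + s.
Proof.
move=> ha hb ht htD hp hs hba hc g.
have hbt : 0 < b + t by lra.
have hp' : p = b / t ^+ 2 by rewrite -hp mulfK // expf_neq0 // lt0r_neq0.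
have hs' : s = a / t ^+ 2 by rewrite -hs mulfK // expf_neq0 // lt0r_neq0.
have h1g : 1 - g = t / (b + t) by rewrite /g; field; lra.
split.
  apply/andP; split; first by rewrite /g divr_gt0.
  by rewrite /g ltr_pdivrMr // mul1r; lra.
rewrite h1g hp' hs' /g.
have -> : b / t ^+ 2 / (b / (b + t)) + 1 / (t / (b + t) * b) = (b + t) ^+ 2 / (t ^+ 2 * b).
  field; repeat split; lra.
have -> : b / t ^+ 2 + a / t ^+ 2 = (b * (a + b)) / (t ^+ 2 * b).
  field; lra.
rewrite ltr_pM2r ?invr_gt0 ?mulr_gt0 ?exprn_gt0 //.
have hc2 : 2 * b * t < c ^+ 2.
  have h4 : (2 * b * t) ^+ 2 < (c ^+ 2) ^+ 2.
    rewrite -exprM /=. 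
    have : (2 * b * t) ^+ 2 = 4 * b * b * t ^+ 2 by ring.
    move=> ->; rewrite htD; nra.
  rewrite -(ltr_pXn2r (n := 2)) //; rewrite nnegrE; [nra | ].
  by apply: sqr_ge0.
nra.
Qed.

Theorem theorem1 (R : rcfType) (Q : 'M[R]_2) :
  sym_posdef Q ->
  (Q12 Q) ^+ 2 / (Q11 Q * Q22 Q) > 2 * Num.sqrt 2 - 2 ->
  exists g : R, 0 < g < 1 /\ Num.min (mu1 Q g) (mu2 Q g) < mu Q.
Proof.
move=> hQ hr.
have hsym : Q ord_max ord0 = Q ord0 ord_max.
  by case: hQ => hT _; rewrite -{1}hT mxE.
rewrite /Q11 /Q12 /Q22 in hr.
set a := Q ord0 ord0 in hr *.
set b := Q ord_max ord_max in hr *.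
set c := Q ord0 ord_max in hr hsym *.
have ha : 0 < a.
  have := @pos_form _ Q 1 0 hQ; rewrite oner_neq0 /= => /(_ isT).
  rewrite -/a -/b -/c; nra.
have hb : 0 < b.
  have := @pos_form _ Q 0 1 hQ; rewrite oner_neq0 orbT => /(_ isT).
  rewrite -/a -/b -/c; nra.
have hD : 0 < a * b - c ^+ 2.
  have := @pos_form _ Q c (-a) hQ.
  rewrite oppr_eq0 (lt0r_neq0 ha) orbT => /(_ isT).
  rewrite -/a -/b -/c hsym => h.
  have : 0 < a * (a * b - c ^+ 2) by rewrite -[X in 0 < X]/(_) ; nra.
  by rewrite pmulr_rgt0.
set D := a * b - c ^+ 2 in hD *.
have hdet : \det Q = D by rewrite det2 hsym.
have hU : Q \in unitmx by rewrite unitmxE hdet unitfE (lt0r_neq0 hD).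
have hI := mulmxV hU.
set X := invmx Q in hI *.
have E i j : (Q *m X) i j = (1%:M : 'M[R]_2) i j by rewrite hI.
have E00 := E ord0 ord0; have E01 := E ord0 ord_max.
have E10 := E ord_max ord0; have E11 := E ord_max ord_max.
move: E00 E01 E10 E11; rewrite !mul2 !mxE /= hsym -/a -/b -/c.
move=> E00 E01 E10 E11.
have hp : X ord0 ord0 * D = b.
  have -> : X ord0 ord0 * D = b * (a * X ord0 ord0 + c * X ord_max ord0)
     - c * (c * X ord0 ord0 + b * X ord_max ord0) by rewrite /D; ring.
  by rewrite E00 E10; ring.
have hs : X ord_max ord_max * D = a.
  have -> : X ord_max ord_max * D = a * (c * X ord0 ord_max + b * X ord_max ord_max)
     - c * (a * X ord0 ord_max + c * X ord_max ord_max) by rewrite /D; ring.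
  by rewrite E01 E11; ring.
have htr : mu Q = X ord0 ord0 + X ord_max ord_max by rewrite /mu tr2.
have htr1 : \tr (W1 R *m X) = X ord0 ord0.
  by rewrite tr2 !mul2 /W1 !mxE /=; ring.
have htr2 : \tr (W2 R *m X) = X ord_max ord_max.
  by rewrite tr2 !mul2 /W2 !mxE /=; ring.
have hc : 4 * a * b * (a * b - c ^+ 2) < c ^+ 4.
  have hab : 0 < a * b by rewrite mulr_gt0.
  set r := c ^+ 2 / (a * b) in hr.
  have hcr : c ^+ 2 = r * (a * b) by rewrite /r mulfVK // lt0r_neq0.
  have hs2 : Num.sqrt 2 ^+ 2 = 2 :> R by rewrite sqr_sqrtr.
  have hs0 : 0 <= Num.sqrt 2 :> R by rewrite sqrtr_ge0.
  have hr8 : 4 < r ^+ 2 + 4 * r by nra.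
  have -> : c ^+ 4 = (c ^+ 2) ^+ 2 by rewrite -exprM.
  rewrite hcr.
  have : 0 < (a * b) ^+ 2 by rewrite exprn_gt0.
  nra.
set t := Num.sqrt D.
have ht : 0 < t by rewrite sqrtr_gt0.
have htD : t ^+ 2 = D by rewrite sqr_sqrtr // ltW.
rewrite -htD in hp hs.
case: (leP b a) => hba.
  have [hg hlt] := @key _ _ _ _ _ _ _ ha hb ht htD hp hs hba hc.
  exists (b / (b + t)); split => //.
  rewrite htr; apply: le_lt_trans hlt.
  by rewrite ge_min /mu1 htr1 lexx.
have hab' : a <= b by apply: ltW.
have hc' : 4 * b * a * (b * a - c ^+ 2) < c ^+ 4.
  by have -> : 4 * b * a * (b * a - c ^+ 2) = 4 * a * b * (a * b - c ^+ 2) by ring.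
have htD' : t ^+ 2 = b * a - c ^+ 2 by rewrite mulrC.
have [hg hlt] := @key _ _ _ _ _ _ _ hb ha ht htD' hs hp hab' hc'.
exists (a / (a + t)); split => //.
rewrite htr (addrC (X ord0 ord0)); apply: le_lt_trans hlt.
by rewrite ge_min /mu2 htr2 lexx orbT.
Qed.
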